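(* Let $F$ be a field, $n\ge3$, and let $x\mapsto\bar x$ be either the identity map of $F$ or a field automorphism of $F$ of order $2$ (applied entrywise to matrices). Let $G$ be the set of block matrices $\begin{pmatrix}a&b\\c&d\end{pmatrix}\in\mathrm{SL}_{2n}(F)$ ($n\times n$ blocks) satisfying $$a\bar d^T+b\bar c^T=1_n,\quad a\bar b^T+b\bar a^T=0,\quad c\bar d^T+d\bar c^T=0.$$ Let $V=\left\{\begin{pmatrix}1&k\\0&1\end{pmatrix}:\bar k^T=-k\right\}$, $V^T=\left\{\begin{pmatrix}1&0\\k&1\end{pmatrix}:\bar k^T=-k\right\}$ and $H=\left\{\begin{pmatrix}a^{-1}&0\\0&\bar a^T\end{pmatrix}:a\in\mathrm{GL}_n(F)\right\}$. Then $G=VV^TV(H\cap G)$. *)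

(* Defs.v *)
From HB Require Import structures.
From mathcomp Require Import all_boot all_order all_algebra.
Set Implicit Arguments. Unset Strict Implicit. Unset Printing Implicit Defensive.
Import Order.TTheory GRing.Theory Num.Theory.
Local Open Scope ring_scope.

Section Defs.
Variable (F : fieldType) (s : {rmorphism F -> F}) (n : nat).

Definition conjT m p (a : 'M[F]_(m, p)) : 'M[F]_(p, m) := (map_mx s a)^T.

Definition inG (g : 'M[F]_(n + n)) : Prop :=
  let a := ulsubmx g in let b := ursubmx g in
  let c := dlsubmx g in let d := drsubmx g in
  [/\ \det g = 1,
      a *m conjT d + b *m conjT c = 1%:M,
      a *m conjT b + b *m conjT a = 0 &
      c *m conjT d + d *m conjT c = 0].

Definition inV (v : 'M[F]_(n + n)) : Prop :=
  exists k : 'M[F]_n, conjT k = - k /\ v = block_mx 1%:M k 0 1%:M.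

Definition inVT (v : 'M[F]_(n + n)) : Prop :=
  exists k : 'M[F]_n, conjT k = - k /\ v = block_mx 1%:M 0 k 1%:M.

Definition inH (h : 'M[F]_(n + n)) : Prop :=
  exists a : 'M[F]_n, a \in unitmx /\ h = block_mx (invmx a) 0 0 (conjT a).

End Defs.

(* Main.v *)
Require Import Defs.
From HB Require Import structures.
From mathcomp Require Import all_boot all_order all_algebra.
From mathcomp Require Import zify.
Import GRing.Theory.
Set Implicit Arguments. Unset Strict Implicit.
Local Open Scope ring_scope.

Lemma zm1 (V : zmodType) (x y z w : V) : -x + z - y - - w = -(x + y - z - w).
Proof. rewrite !opprB !opprD !opprK addrC; congr (w + _). by rewrite (addrC (-x) z) -addrA. Qed.

Lemma zm2 (V : zmodType) (x y z w : V) : (x + y + z) - (z + y - w) = x + w.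
Proof.
by rewrite opprB opprD addrA (addrC _ w) !addrA addrK addrK addrC.
Qed.

Section S.
Variable F : fieldType.
Variable s : {rmorphism F -> F}.
Hypothesis sK : forall x, s (s x) = x.
Local Notation ct := (conjT s).

Lemma ctK m p (A : 'M[F]_(m,p)) : ct (ct A) = A.
Proof.
rewrite /conjT map_trmx trmxK -map_mx_comp.
by apply/matrixP=> i j; rewrite !mxE /= sK.
Qed.
Lemma ctM m p q (A : 'M[F]_(m,p)) (B : 'M[F]_(p,q)) : ct (A *m B) = ct B *m ct A.
Proof. by rewrite /conjT map_mxM trmx_mul. Qed.
Lemma ctD m p (A B : 'M[F]_(m,p)) : ct (A + B) = ct A + ct B.
Proof. by rewrite /conjT map_mxD linearD. Qed.
Lemma ctN m p (A : 'M[F]_(m,p)) : ct (- A) = - ct A.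
Proof. by rewrite /conjT map_mxN linearN. Qed.
Lemma ct0 m p : ct (0 : 'M[F]_(m,p)) = 0.
Proof. by rewrite /conjT map_mx0 trmx0. Qed.
Lemma ct1 m : ct (1%:M : 'M[F]_m) = 1%:M.
Proof. by rewrite /conjT map_mx1 trmx1. Qed.
Lemma ctZ m p x (A : 'M[F]_(m,p)) : ct (x *: A) = s x *: ct A.
Proof. by rewrite /conjT map_mxZ linearZ. Qed.
Lemma ct_block m1 m2 n1 n2 (a : 'M[F]_(m1,n1)) (b : 'M[F]_(m1,n2)) (c : 'M[F]_(m2,n1)) (d : 'M[F]_(m2,n2)) :
  ct (block_mx a b c d) = block_mx (ct a) (ct c) (ct b) (ct d).
Proof. by rewrite /conjT map_block_mx tr_block_mx. Qed.
Lemma ct_pid m r : ct (pid_mx r : 'M[F]_m) = pid_mx r.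
Proof. by rewrite /conjT map_pid_mx tr_pid_mx. Qed.
Lemma ct_inv m (A : 'M[F]_m) : ct (invmx A) = invmx (ct A).
Proof. by rewrite /conjT map_invmx trmx_inv. Qed.
Lemma ct_unit m (A : 'M[F]_m) : (ct A \in unitmx) = (A \in unitmx).
Proof. by rewrite /conjT unitmx_tr map_unitmx. Qed.
Lemma det_ct m (A : 'M[F]_m) : \det (ct A) = s (\det A).
Proof. by rewrite /conjT det_tr det_map_mx. Qed.

Definition K n : 'M[F]_(n+n) := block_mx 0 1%:M 1%:M 0.

Ltac bsimp := rewrite ?mulmx_block ?mulmx0 ?mul0mx ?mulmx1 ?mul1mx ?addr0 ?add0r.

Lemma KK n : K n *m K n = 1%:M.
Proof. by rewrite /K; bsimp; rewrite scalar_mx_block. Qed.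

Lemma ctK_ n : ct (K n) = K n.
Proof. by rewrite /K ct_block !ct0 ct1. Qed.

Lemma iso_unit n (g : 'M[F]_(n+n)) : g *m K n *m ct g = K n -> g \in unitmx.
Proof.
move=> h.
have : (g *m (K n *m ct g *m K n)) = 1%:M by rewrite !mulmxA h KK.
move=> h1; rewrite unitmxE; apply/unitrP; exists (\det (K n *m ct g *m K n)).
by rewrite -!det_mulmx h1 (mulmx1C h1) det1.
Qed.

Lemma iso_dual n (g : 'M[F]_(n+n)) : g *m K n *m ct g = K n -> ct g *m K n *m g = K n.
Proof.
move=> h.
have h1 : (g *m (K n *m ct g *m K n)) = 1%:M by rewrite !mulmxA h KK.
have h2 := mulmx1C h1.
have : K n *m (K n *m ct g *m K n *m g) = K n by rewrite h2 mulmx1.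
by rewrite !mulmxA KK mul1mx.
Qed.

Lemma iso_mul n (g h : 'M[F]_(n+n)) : g *m K n *m ct g = K n -> h *m K n *m ct h = K n ->
  (g *m h) *m K n *m ct (g *m h) = K n.
Proof.
move=> hg hh; rewrite ctM.
have -> : g *m h *m K n *m (ct h *m ct g) = g *m (h *m K n *m ct h) *m ct g by rewrite !mulmxA.
by rewrite hh.
Qed.

Lemma dual_rel n (a b c d : 'M[F]_n) :
  ct (block_mx a b c d) *m K n *m block_mx a b c d = K n ->
  ct c *m a + ct a *m c = 0 /\ ct c *m b + ct a *m d = 1%:M.
Proof.
rewrite ct_block /K; bsimp.
by case/eq_block_mx => -> -> _ _.
Qed.

Lemma inG_iso n (g : 'M[F]_(n+n)) :
  inG s g <-> \det g = 1 /\ g *m K n *m ct g = K n.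
Proof.
rewrite -(submxK g); move: (ulsubmx g) (ursubmx g) (dlsubmx g) (drsubmx g) => a b c d.
rewrite /inG block_mxKul block_mxKur block_mxKdl block_mxKdr ct_block /K; bsimp.
split.
  case=> h1 h2 h3 h4; split => //.
  have h5 : d *m ct a + c *m ct b = 1%:M.
    by rewrite -[d]ctK -[c]ctK -ctM -ctM -ctD h2 ct1.
  by rewrite (addrC (b *m ct a)) h3 (addrC (b *m ct c)) h2 h5 (addrC (d *m ct c)) h4.
case=> h1 /eq_block_mx [e1 e2 e3 e4]; split => //.
- by rewrite addrC.
- by rewrite addrC.
- by rewrite addrC.
Qed.

Lemma unit_of_rker n (M : 'M[F]_n) : (forall X : 'M_n, M *m X = 0 -> X = 0) -> M \in unitmx.
Proof.
move=> h; rewrite -unitmx_tr -row_free_unit -kermx_eq0; apply/eqP.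
have e : M *m (kermx M^T)^T = 0 by rewrite -[M *m _]trmxK trmx_mul trmxK mulmx_ker trmx0.
by rewrite -[kermx _]trmxK (h _ e) trmx0.
Qed.

Lemma decomp n (a c : 'M[F]_n) :
  ct c *m a + ct a *m c = 0 ->
  (forall X : 'M_n, a *m X = 0 -> c *m X = 0 -> X = 0) ->
  exists P Q k0 e : 'M[F]_n,
   [/\ P \in unitmx, Q \in unitmx, c = P *m (pid_mx (\rank c) : 'M_n) *m Q, ct k0 = - k0 &
       [/\ a - k0 *m c = invmx (ct P) *m e *m Q,
       (pid_mx (\rank c) : 'M_n) *m e = 0, e *m (pid_mx (\rank c) : 'M_n) = 0 &
       forall T0 : 'M_n, (pid_mx (\rank c) : 'M_n) *m T0 = T0 ->
         (forall X : 'M_n, T0 *m X = 0 -> (pid_mx (\rank c) : 'M_n) *m X = 0) -> (e + T0) \in unitmx]].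
Proof.
move=> hrel hker.
set r := \rank c.
have hr : (r <= n)%N by exact: rank_leq_row.
set D : 'M[F]_n := pid_mx r.
set E : 'M[F]_n := copid_mx r.
set P := col_ebase c; set Q := row_ebase c.
have hc : c = P *m D *m Q by rewrite mulmx_ebase.
have uP : P \in unitmx by exact: col_ebase_unit.
have uQ : Q \in unitmx by exact: row_ebase_unit.
have DD : D *m D = D by exact: pid_mx_id.
have DE : D *m E = 0 by exact: mul_pid_mx_copid.
have ED : E *m D = 0 by exact: mul_copid_mx_pid.
have EDs : E + D = 1%:M by rewrite /E /copid_mx subrK.
have cD : ct D = D by exact: ct_pid.
have cE : ct E = E by rewrite /E /copid_mx ctD ctN ct1 cD.
clearbody E D.
set a0 := ct P *m a *m invmx Q.
have e1 : c *m invmx Q = P *m D by rewrite hc mulmxK.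
have e2 : ct (invmx Q) *m ct c = D *m ct P.
  by rewrite -ctM e1 ctM cD.
have rel : ct a0 *m D + D *m a0 = 0.
  have : ct (invmx Q) *m (ct c *m a + ct a *m c) *m invmx Q = 0 by rewrite hrel mulmx0 mul0mx.
  rewrite mulmxDr mulmxDl !mulmxA e2 -(mulmxA _ c) e1 => <-.
  rewrite /a0 !ctM ctK // !mulmxA addrC.
  done.
have DaE : D *m a0 *m E = 0.
  have : (ct a0 *m D + D *m a0) *m E = 0 by rewrite rel mul0mx.
  by rewrite mulmxDl -mulmxA DE mulmx0 add0r.
have Da : D *m a0 = D *m a0 *m D.
  by rewrite -{1}[D *m a0]mulmx1 -EDs mulmxDr DaE add0r.
have relD : ct a0 *m D = - (D *m a0) by apply/eqP; rewrite -addr_eq0 rel.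
have skD : ct (D *m a0 *m D) = - (D *m a0 *m D).
  rewrite [ct (D *m a0 *m D)]ctM [ct (D *m a0)]ctM cD.
  by rewrite -mulmxA relD mulmxN (mulmxA D D a0) DD mulmxA -Da.
set kap := D *m a0 *m D + E *m a0 *m D - ct (E *m a0 *m D) - 0.
have hkap : ct kap = - kap.
  rewrite /kap !ctD !ctN ctK // skD ct0 -[in LHS]oppr0.
  exact: zm1.
have cED : ct (E *m a0 *m D) *m D = 0.
  by rewrite !ctM cD cE -!mulmxA ED !mulmx0.
have kD : kap *m D = D *m a0 *m D + E *m a0 *m D - 0.
  by rewrite /kap !mulmxBl !mulmxDl cED subr0 -!mulmxA DD mul0mx.
clearbody kap.
have a0dec : a0 = E *m a0 *m E + E *m a0 *m D + D *m a0 *m D.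
  by rewrite -{1}[a0]mul1mx -EDs mulmxDl {1}Da -{1}[E *m a0]mulmx1 -EDs mulmxDr.
have M0e : a0 - kap *m D = E *m a0 *m E + 0.
  by rewrite kD {1}a0dec zm2.
rewrite addr0 in M0e.
have ea0 : invmx (ct P) *m a0 *m Q = a.
  by rewrite /a0 !mulmxA mulVmx ?ct_unit // mul1mx mulmxKV.
exists P, Q, (invmx (ct P) *m kap *m invmx P), (E *m a0 *m E); split => //.
  by rewrite !ctM !ct_inv ctK // hkap mulNmx mulmxN mulmxA.
split.
- rewrite -M0e mulmxBr mulmxBl ea0; congr (a - _).
  by rewrite hc !mulmxA mulmxKV.
- by rewrite !mulmxA DE !mul0mx.
- by rewrite -mulmxA ED mulmx0.
move=> T0 hDT hTk.
apply: unit_of_rker => X hX.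
have hT0X : T0 *m X = 0.
  have : D *m ((E *m a0 *m E + T0) *m X) = 0 by rewrite hX mulmx0.
  by rewrite mulmxDl mulmxDr !mulmxA DE !mul0mx add0r hDT.
have DX := hTk _ hT0X.
have EX : E *m X = X by rewrite -{2}[X]mul1mx -EDs mulmxDl DX addr0.
have Ea0X : E *m a0 *m X = 0.
  by move: hX; rewrite mulmxDl hT0X addr0 -mulmxA EX.
have Da0X : D *m a0 *m X = 0 by rewrite -EX mulmxA DaE mul0mx.
have a0X : a0 *m X = 0.
  by rewrite -[a0]mul1mx -EDs !mulmxDl Ea0X Da0X addr0.
set Y := invmx Q *m X.
have aY : a *m Y = 0.
  have uPc : ct P \in unitmx by rewrite ct_unit.
  rewrite -(mulKmx uPc (a *m Y)) /Y !mulmxA.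
  have : invmx (ct P) *m (a0 *m X) = 0 by rewrite a0X mulmx0.
  by rewrite /a0 !mulmxA.
have cY : c *m Y = 0 by rewrite /Y mulmxA e1 -mulmxA DX mulmx0.
by rewrite -(mulKVmx uQ X) -/Y (hker _ aY cY) mulmx0.
Qed.

Lemma key n (a c : 'M[F]_n) (T0 : 'M[F]_n) :
  ct c *m a + ct a *m c = 0 ->
  (forall X : 'M_n, a *m X = 0 -> c *m X = 0 -> X = 0) ->
  (pid_mx (\rank c) : 'M_n) *m T0 = T0 -> T0 *m (pid_mx (\rank c) : 'M_n) = T0 -> ct T0 = - T0 ->
  (forall X : 'M_n, T0 *m X = 0 -> (pid_mx (\rank c) : 'M_n) *m X = 0) ->
  exists k, ct k = - k /\ (a - k *m c) \in unitmx.
Proof.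
move=> hrel hker hDT hTD hT hTk.
have [P [Q [k0 [e [uP uQ hc hk0 [he De eD hu]]]]]] := @decomp n a c hrel hker.
exists (k0 - invmx (ct P) *m T0 *m invmx P); split.
  by rewrite ctD ctN hk0 !ctM !ct_inv ctK // hT mulNmx mulmxN mulmxA opprK opprB addrC.
suff -> : a - (k0 - invmx (ct P) *m T0 *m invmx P) *m c = invmx (ct P) *m (e + T0) *m Q.
  by rewrite !unitmx_mul unitmx_inv ct_unit uP uQ (hu _ hDT hTk).
rewrite mulmxBl opprB addrCA addrC he mulmxDr mulmxDl; congr (_ + _).
by rewrite hc !mulmxA mulmxKV // -(mulmxA _ T0) hTD.
Qed.

Lemma prod_sign n r : (r <= n)%N ->
  \prod_(i < n) (if (i < r)%N then -1 else 1 : F) = (-1) ^+ r.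
Proof.
move=> hr.
rewrite -(big_mkord xpredT (fun i => if (i < r)%N then -1 else 1 : F)).
rewrite (@big_cat_nat _ _ _ r 0 n) /=; [|exact: leq0n|exact: hr].
rewrite big_nat_cond (eq_bigr (fun _ => -1)); last first.
  by move=> i /andP[/andP[_ ->] _].
rewrite -big_nat_cond prodr_const_nat subn0.
rewrite big_nat_cond big1 ?mulr1 //.
by move=> i /andP[/andP[h _] _]; rewrite ltnNge h.
Qed.

Lemma det_tau n r : (r <= n)%N ->
  \det (block_mx (copid_mx r) (pid_mx r) (pid_mx r) (copid_mx r) : 'M[F]_(n+n)) = (-1) ^+ r.
Proof.
move=> hr.
set D : 'M[F]_n := pid_mx r; set E : 'M[F]_n := copid_mx r.
have DD : D *m D = D by exact: pid_mx_id.
have ED : E *m D = 0 by exact: mul_copid_mx_pid.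
have EDs : E + D = 1%:M by rewrite /E /copid_mx subrK.
have h : block_mx 1%:M (- D) 0 1%:M *m (block_mx E D D E *m block_mx 1%:M D 0 1%:M)
   = block_mx (E - D) 0 D 1%:M.
  rewrite !mulmx_block !mulmx0 !mul0mx !mulmx1 !mul1mx !addr0 !add0r.
  by rewrite !mulNmx DD ED add0r (addrC D E) EDs mulmx1 subrr.
have := congr1 determinant h.
rewrite !det_mulmx !det_ublock det_lblock !det1 !mul1r !mulr1.
move=> ->.
have -> : E - D = diag_mx (\row_i (if (i < r)%N then -1 else 1)).
  apply/matrixP => i j; rewrite /E /D /copid_mx !mxE.
  case: (eqVneq i j) => [<-|nij] /=.
    rewrite eqxx /=; case: (i < r)%N => /=; rewrite ?subr0 ?mulr1n //.
    by rewrite subrr sub0r.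
  have : (i == j :> nat) = false by apply/negbTE; move: nij; apply: contra => /eqP/val_inj ->.
  by move=> -> /=; rewrite !subr0.
by rewrite (@det_diag F n) (eq_bigr (fun i : 'I_n => if (i < r)%N then -1 else 1)) ?prod_sign // => i _; rewrite mxE.
Qed.

Lemma iso_diag n (X Y : 'M[F]_n) : X *m ct Y = 1%:M ->
  block_mx X 0 0 Y *m K n *m ct (block_mx X 0 0 Y) = K n.
Proof.
move=> h; rewrite ct_block !ct0 /K.
rewrite !mulmx_block !mulmx0 !mul0mx !mulmx1 !addr0 !add0r h.
rewrite -[Y]ctK -ctM h ct1 ctK.
by rewrite (mul0mx _ (ct X)) mul0mx.
Qed.

Lemma det_diag_iso n (X Y : 'M[F]_n) : (forall x, s x = x) -> X *m ct Y = 1%:M ->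
  \det (block_mx X 0 0 Y) = 1.
Proof.
move=> sid h; rewrite det_ublock.
by have := congr1 determinant h; rewrite det_mulmx det_ct sid det1.
Qed.

Lemma iso_V n (k : 'M[F]_n) : ct k = - k -> block_mx 1%:M k 0 1%:M *m K n *m ct (block_mx 1%:M k 0 1%:M) = K n.
Proof.
move=> hk; apply: (proj2 (proj1 (@inG_iso n _) _)).
rewrite /inG block_mxKul block_mxKur block_mxKdl block_mxKdr det_ublock det1 mulr1.
rewrite !ct1 ct0 hk !mulmx1 mulmx0 addr0 mul1mx.
by split => //; rewrite ?addNr // mulmx0 addr0.
Qed.

Lemma iso_VT n (k : 'M[F]_n) : ct k = - k -> block_mx 1%:M 0 k 1%:M *m K n *m ct (block_mx 1%:M 0 k 1%:M) = K n.
Proof.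
move=> hk; apply: (proj2 (proj1 (@inG_iso n _) _)).
rewrite /inG block_mxKul block_mxKur block_mxKdl block_mxKdr det_lblock det1 mulr1.
rewrite !ct1 ct0 hk !mulmx1 ?mulmx0 ?addr0 ?mul0mx ?addr0.
by split => //; rewrite mul1mx subrr.
Qed.

Lemma blk_ker n (a b c d : 'M[F]_n) : block_mx a b c d \in unitmx ->
  forall X : 'M_n, a *m X = 0 -> c *m X = 0 -> X = 0.
Proof.
move=> u X ha hc.
have h : block_mx a b c d *m col_mx X 0 = 0.
  by rewrite mul_block_col ha hc !mulmx0 !addr0 col_mx0.
have : col_mx X (0 : 'M_(n, n)) = 0 by rewrite -(mulKmx u (col_mx X 0)) h mulmx0.
by move/eqP; rewrite col_mx_eq0 => /andP[/eqP].
Qed.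

Lemma parity n (a b c d : 'M[F]_n) : (forall x, s x = x) -> (2%:R : F) != 0 ->
  \det (block_mx a b c d) = 1 ->
  block_mx a b c d *m K n *m ct (block_mx a b c d) = K n -> ~~ odd (\rank c).
Proof.
move=> sid h2 hdet hiso.
have ug := iso_unit hiso.
have [hrel _] := dual_rel (iso_dual hiso).
have hker := blk_ker ug.
have [P [Q [k0 [e [uP uQ hc hk0 [he De eD hu]]]]]] := @decomp n a c hrel hker.
have hr : (\rank c <= n)%N by exact: rank_leq_row.
move: hc De eD hu hr; set r := \rank c => hc De eD hu hr.
move: hc De eD hu; set D : 'M[F]_n := pid_mx r => hc De eD hu.
set E : 'M[F]_n := copid_mx r.
have DD : D *m D = D by exact: pid_mx_id.
have DE : D *m E = 0 by exact: mul_pid_mx_copid.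
have ED : E *m D = 0 by exact: mul_copid_mx_pid.
have EE : E *m E = E by exact: copid_mx_id.
have EDs : E + D = 1%:M by rewrite /E /copid_mx subrK.
have cD : ct D = D by exact: ct_pid.
have cE : ct E = E by rewrite /E /copid_mx ctD ctN ct1 cD.
have dtau : \det (block_mx E D D E) = (-1) ^+ r by exact: det_tau.
clearbody E D.
have hDe : D *m (e + D) = D by rewrite mulmxDr De add0r DD.
have hEe : E *m (e + D) = e.
  by rewrite mulmxDr ED addr0 -{2}[e]mul1mx -EDs mulmxDl De addr0.
have ub := hu D DD (fun X h => h).
move: hDe hEe ub; set beta := e + D => hDe hEe ub.
have hL : ct P *m ct (invmx P) = 1%:M by rewrite -ctM mulVmx // ct1.
have hR : invmx Q *m ct (ct Q) = 1%:M by rewrite ctK // mulVmx.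
have hB : invmx beta *m ct (ct beta) = 1%:M by rewrite ctK // mulVmx.
have sk : ct (- k0) = - - k0 by rewrite ctN hk0.
set g3 := block_mx (ct P) 0 0 (invmx P) *m (block_mx 1%:M (- k0) 0 1%:M *m block_mx a b c d)
   *m block_mx (invmx Q) 0 0 (ct Q) *m block_mx (invmx beta) 0 0 (ct beta).
have iso3 : g3 *m K n *m ct g3 = K n.
  apply: iso_mul; last exact: iso_diag.
  apply: iso_mul; last exact: iso_diag.
  apply: iso_mul; first exact: iso_diag.
  by apply: iso_mul => //; exact: iso_V.
have det3 : \det g3 = 1.
  by rewrite /g3 !det_mulmx !det_diag_iso // det_ublock !det1 hdet !mulr1.
have [b3 [d3 eg3]] : exists b3 d3, g3 = block_mx E b3 D d3.
  exists (ursubmx g3), (drsubmx g3); rewrite -{1}[g3]submxK; congr block_mx.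
    rewrite /g3 !mulmx_block block_mxKul !mulmx0 !mul0mx ?addr0 ?add0r ?mulmx1 ?mul1mx.
    by rewrite mulNmx he !mulmxA mulmxV ?ct_unit // mul1mx mulmxK // -hEe mulmxK.
  rewrite /g3 !mulmx_block block_mxKdl !mulmx0 !mul0mx ?addr0 ?add0r ?mulmx1 ?mul1mx.
  by rewrite hc !mulmxA mulVmx // mul1mx mulmxK // -{1}hDe mulmxK.
have [_ hrel3] := dual_rel (iso_dual (etrans (congr1 (fun M => M *m K n *m ct M) (esym eg3)) iso3)).
rewrite cD cE in hrel3.
have ht : block_mx E D D E *m g3 = block_mx 1%:M (E *m b3 + D *m d3) 0 1%:M.
  rewrite eg3 mulmx_block EE DD EDs ED DE addr0 addrC hrel3.
  done.
have := congr1 determinant ht.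
rewrite det_mulmx det_ublock !det1 mulr1 det3 mulr1 dtau.
move=> hm; apply/negP => hodd.
rewrite -signr_odd hodd expr1 in hm.
by move: h2; rewrite mulr2n -{2}hm subrr eqxx.
Qed.

Definition fn (i : nat) := if odd i then i.-1 else i.+1.

Lemma fn_facts r i : ~~ odd r -> (i < r)%N ->
  [/\ (fn i < r)%N, fn (fn i) = i & odd (fn i) = ~~ odd i].
Proof.
rewrite /fn => hr hi; case: (boolP (odd i)) => hoi.
- have hp : (0 < i)%N by lia.
  have ho : odd i.-1 = false.
    by move: hoi; case: i hp {hi} => //= i _ /negbTE.
  rewrite ho /=; split => //; lia.
- have ho : odd i.+1 by rewrite /= hoi.
  rewrite ho /=; split => //.
  lia.
Qed.

Lemma pid_diag n r : (pid_mx r : 'M[F]_n) = diag_mx (\row_i ((i < r)%N)%:R).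
Proof.
apply/matrixP => i j; rewrite !mxE.
case: (eqVneq i j) => [<-|nij]; first by rewrite eqxx /= mulr1n.
have -> : (i == j :> nat) = false by apply/negbTE; move: nij; apply: contra => /eqP/val_inj ->.
by rewrite mulr0n.
Qed.

Lemma ct_id m p (A : 'M[F]_(m,p)) : (forall x, s x = x) -> ct A = A^T.
Proof. by move=> sid; apply/matrixP => i j; rewrite !mxE sid. Qed.

Lemma exists_T0 n r : (forall x, s x = x) -> (r <= n)%N -> ~~ odd r ->
 exists T0 : 'M[F]_n, [/\ (pid_mx r : 'M_n) *m T0 = T0, T0 *m (pid_mx r : 'M_n) = T0, ct T0 = - T0 &
    forall X : 'M_n, T0 *m X = 0 -> (pid_mx r : 'M_n) *m X = 0].
Proof.
move=> sid hrn hr.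
pose f (i : 'I_n) : 'I_n := insubd i (fn i).
pose sg (i : 'I_n) : F := if (i < r)%N then (if odd i then -1 else 1) else 0.
have fv : forall i : 'I_n, (i < r)%N -> val (f i) = fn i.
  move=> i hi; rewrite val_insubd; have [h1 _ _] := fn_facts hr hi.
  by rewrite (leq_trans h1 hrn).
have flt : forall i : 'I_n, (i < r)%N -> (f i < r)%N.
  by move=> i hi; rewrite fv //; have [] := fn_facts hr hi.
have ff : forall i : 'I_n, (i < r)%N -> f (f i) = i.
  move=> i hi; apply: val_inj; rewrite fv ?flt // fv //.
  by have [] := fn_facts hr hi.
have sgf : forall i : 'I_n, (i < r)%N -> sg i * sg (f i) = -1.
  move=> i hi; rewrite /sg hi flt // fv //; have [_ _ ->] := fn_facts hr hi.
  by case: (odd i); rewrite /= ?mulN1r ?mulr1 ?mul1r ?opprK.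
have sg0 : forall i : 'I_n, ~~ (i < r)%N -> sg i = 0 by move=> i /negbTE hi; rewrite /sg hi.
pose T0 : 'M[F]_n := \matrix_(i, j) (sg i * (f i == j)%:R).
exists T0; split.
- rewrite pid_diag mul_diag_mx; apply/matrixP => i j; rewrite !mxE.
  case: (boolP (i < r)%N) => hi; first by rewrite mul1r.
  by rewrite mul0r sg0 // mul0r.
- rewrite pid_diag mul_mx_diag; apply/matrixP => i j; rewrite !mxE.
  case: (boolP (j < r)%N) => hj; first by rewrite mulr1.
  rewrite mulr0; case: (boolP (i < r)%N) => hi; last by rewrite sg0 // mul0r.
  suff -> : (f i == j) = false by rewrite mulr0.
  by apply/negbTE; apply: contraNneq hj => <-; exact: flt.
- rewrite ct_id //; apply/matrixP => i j; rewrite !mxE.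
  case: (boolP (i < r)%N) => hi; last first.
    rewrite (sg0 _ hi) mul0r oppr0; case: (boolP (j < r)%N) => hj; last by rewrite (sg0 _ hj) mul0r.
    suff -> : (f j == i) = false by rewrite mulr0.
    by apply/negbTE; apply: contraNneq hi => <-; exact: flt.
  case: (boolP (j < r)%N) => hj; last first.
    rewrite (sg0 _ hj) mul0r.
    suff -> : (f i == j) = false by rewrite mulr0 oppr0.
    by apply/negbTE; apply: contraNneq hj => <-; exact: flt.
  case: (eqVneq (f i) j) => hfij.
    rewrite -hfij ff // eqxx !mulr1.
    apply/eqP; rewrite -addr_eq0; apply/eqP.
    rewrite /sg hi flt // fv //; have [_ _ ->] := fn_facts hr hi.
    by case: (odd i); rewrite /= ?addNr ?subrr.
  suff -> : (f j == i) = false by rewrite !mulr0 oppr0.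
  by apply/negbTE; apply: contraNneq hfij => <-; rewrite ff.
move=> X hX.
have TT : T0 *m T0 = - (pid_mx r : 'M_n).
  apply/matrixP => i j; rewrite !mxE (bigD1 (f i)) //= big1 ?addr0; last first.
    by move=> k hk; rewrite !mxE eq_sym (negbTE hk) mulr0 mul0r.
  rewrite !mxE eqxx mulr1.
  case: (boolP (i < r)%N) => hi; last by rewrite (sg0 _ hi) !mul0r andbF mulr0n oppr0.
  by rewrite mulrA sgf // ff // andbT mulN1r.
by rewrite -[X in X *m _ = _]opprK -TT -mulNmx -mulmxA hX mulmx0.
Qed.

Lemma exists_k n (a b c d : 'M[F]_n) :
  ((exists t : F, t != 0 /\ s t = - t) \/ ((forall x, s x = x) /\ (2%:R : F) != 0)) ->
  \det (block_mx a b c d) = 1 ->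
  block_mx a b c d *m K n *m ct (block_mx a b c d) = K n ->
  exists k, ct k = - k /\ (a - k *m c) \in unitmx.
Proof.
move=> hs hdet hiso.
have ug := iso_unit hiso.
have [hrel _] := dual_rel (iso_dual hiso).
have hker := blk_ker ug.
have hr : (\rank c <= n)%N by exact: rank_leq_row.
case: hs => [[t [t0 st]]|[sid h2]].
  apply: (@key n a c (t *: pid_mx (\rank c))) => //.
  - by rewrite -scalemxAr pid_mx_id.
  - by rewrite -scalemxAl pid_mx_id.
  - by rewrite ctZ ct_pid st scaleNr.
  move=> X; rewrite -scalemxAl => /eqP; rewrite scaler_eq0 (negbTE t0) /=.
  by move/eqP.
have hev := parity sid h2 hdet hiso.
have [T0 [h1 h2' h3 h4]] := @exists_T0 n (\rank c) sid hr hev.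
exact: (@key n a c T0).
Qed.

Lemma mainS n (hs : (exists t : F, t != 0 /\ s t = - t) \/ ((forall x, s x = x) /\ (2%:R : F) != 0))
  (g : 'M[F]_(n + n)) :
  inG s g <->
    exists v1 w v2 h : 'M[F]_(n + n),
      [/\ inV s v1, inVT s w, inV s v2, inH s h /\ inG s h &
          g = v1 *m w *m v2 *m h].
Proof.
split.
  rewrite -(submxK g); move: (ulsubmx g) (ursubmx g) (dlsubmx g) (drsubmx g) => a b c d.
  move=> /inG_iso [hdet hiso].
  have [k1 [hk1 ua]] := exists_k hs hdet hiso.
  set a' := a - k1 *m c; set b' := b - k1 *m d.
  set g' := block_mx a' b' c d.
  have eg' : block_mx 1%:M (- k1) 0 1%:M *m block_mx a b c d = g'.
    by rewrite mulmx_block !mul1mx !mul0mx !add0r !mulNmx.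
  have eg : block_mx a b c d = block_mx 1%:M k1 0 1%:M *m g'.
    rewrite /g' mulmx_block !mul1mx !mul0mx !add0r /a' /b'.
    by rewrite !subrK.
  have sk : ct (- k1) = - - k1 by rewrite ctN hk1.
  have iso' : g' *m K n *m ct g' = K n by rewrite -eg'; apply: iso_mul => //; exact: iso_V.
  have det' : \det g' = 1 by rewrite -eg' det_mulmx det_ublock !det1 !mul1r.
  have [_ _ rowrel _] := proj2 (inG_iso g') (conj det' iso').
  rewrite /g' block_mxKul block_mxKur in rowrel.
  have [hrel' hrel2'] := dual_rel (iso_dual iso').
  set A := invmx a'.
  have uA : A \in unitmx by rewrite unitmx_inv.
  have uca : ct a' \in unitmx by rewrite ct_unit.
  have cAa : ct a' *m ct A = 1%:M by rewrite -ctM mulVmx // ct1.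
  set l := c *m A; set k2 := b' *m ct a'.
  have hl : ct l = - l.
    have e1 : ct c = - (ct a' *m c *m A).
      have : (ct c *m a' + ct a' *m c) *m A = 0 by rewrite hrel' mul0mx.
      rewrite mulmxDl -mulmxA mulmxV // mulmx1 => /eqP; rewrite addr_eq0 => /eqP ->.
      done.
    have cA2 : ct A *m ct a' = 1%:M by rewrite -ctM mulmxV // ct1.
    by rewrite /l ctM e1 mulmxN !mulmxA cA2 mul1mx.
  have hk2 : ct k2 = - k2.
    by rewrite /k2 ctM ctK //; apply/eqP; rewrite -addr_eq0 rowrel.
  exists (block_mx 1%:M k1 0 1%:M), (block_mx 1%:M 0 l 1%:M), (block_mx 1%:M k2 0 1%:M),
    (block_mx (invmx A) 0 0 (ct A)).
  have isoh : block_mx (invmx A) 0 0 (ct A) *m K n *m ct (block_mx (invmx A) 0 0 (ct A)) = K n.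
    by apply: iso_diag; rewrite ctK // mulVmx.
  have decomp' : g' = block_mx 1%:M 0 l 1%:M *m block_mx 1%:M k2 0 1%:M *m block_mx (invmx A) 0 0 (ct A).
    rewrite !mulmx_block !mul1mx !mul0mx !mulmx0 !mulmx1 !addr0 !add0r.
    rewrite /A invmxK /g' -/A; congr block_mx.
    - by rewrite mul1mx.
    - by rewrite /k2 -mulmxA cAa mulmx1.
    - by rewrite /l -mulmxA mulVmx // mulmx1.
    apply: (can_inj (mulKmx uca)).
    have e3 : ct a' *m c = - (ct c *m a') by apply/eqP; rewrite -addr_eq0 addrC hrel'.
    have f1 : (ct c *m a') *m A = ct c by rewrite -mulmxA mulmxV // mulmx1.
    symmetry; rewrite mulmxDl mul1mx mulmxDr cAa /l /k2 !mulmxA e3 !mulNmx f1.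
    by rewrite -!mulmxA cAa mulmx1 -hrel2' addKr.
  have dh : \det (block_mx (invmx A) 0 0 (ct A)) = 1.
    move: hdet; rewrite eg decomp' !det_mulmx det_ublock det_lblock det_ublock !det1 !mul1r.
    done.
  split.
  - by exists k1.
  - by exists l.
  - by exists k2.
  - split; first by exists A.
    by apply/inG_iso.
  by rewrite eg decomp' !mulmxA.
case=> v1 [w [v2 [h [[k [hk ->]] [l [hl ->]] [k' [hk' ->]] [_ hG] ->]]]].
have [dh ih] := proj1 (inG_iso h) hG.
apply/inG_iso; split.
  by rewrite !det_mulmx det_ublock det_lblock det_ublock !det1 !mul1r dh.
apply: iso_mul => //; apply: iso_mul; last exact: iso_V.
by apply: iso_mul; [exact: iso_V | exact: iso_VT].
Qed.
End S.

Unset Implicit Arguments.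
Set Strict Implicit.

Theorem lemma4p2 (F : fieldType) (s : {rmorphism F -> F}) (n : nat)
  (hn : (3 <= n)%N)
  (hs : (forall x : F, s x = x) \/
        ((exists x : F, s x != x) /\ (forall x : F, s (s x) = x))) :
  forall g : 'M[F]_(n + n),
    inG s g <->
    exists v1 w v2 h : 'M[F]_(n + n),
      [/\ inV s v1, inVT s w, inV s v2, inH s h /\ inG s h &
          g = v1 *m w *m v2 *m h].
Proof.
have sK : forall x, s (s x) = x by case: hs => [h x|[_ h] x]; rewrite ?h.
have hs' : (exists t : F, t != 0 /\ s t = - t) \/ ((forall x, s x = x) /\ (2%:R : F) != 0).
  case: hs => [sid|[[x hx] _]].
    case: (eqVneq (2%:R : F) 0) => h2; last by right.
    left; exists 1; split; first exact: oner_neq0.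
    by rewrite rmorph1; apply/eqP; rewrite -subr_eq0 opprK -mulr2n h2.
  left; exists (x - s x); split; first by rewrite subr_eq0 eq_sym.
  by rewrite rmorphB sK opprB.
move=> g; exact: (mainS sK hs').
Qed.
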